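(* Let $\mathcal{N}_{A,n}$ be the number of vertices of $\mathcal{T}_n$ at distance $D_n$ from $(0,0)$. Then $\mathcal{N}_{A,1}=3$, $\mathcal{N}_{A,2}=9$, and for $n>2$, $\mathcal{N}_{A,n}=6$ if $n$ is odd and $\mathcal{N}_{A,n}=12$ if $n$ is even.
   Context: For $n\in\mathbb{N}$ let $G_n=\mathbb{Z}_{2^n}\times\mathbb{Z}_{2^n}$ (additive group). Let $S=\{\pm(1,0),\pm(0,1),\pm(1,1)\}$. The undirected graph $\mathcal{T}_n$ is the Cayley graph $\Gamma(G_n,S)$: vertex set $G_n$, each vertex $u$ adjacent to $u+s$ for every $s\in S$ (arithmetic modulo $2^n$). $D_n$ denotes the diameter of $\mathcal{T}_n$ (maximum over pairs of vertices of shortest-path length). *)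

(* Defs.v *)
From mathcomp Require Import all_boot all_order all_algebra.
Unset Printing Implicit Defensive.
Import GRing.Theory.

(* Vertex set of T_n: Z_{2^n} x Z_{2^n}  (for n >= 1, 2^n >= 2 so 'Z_(2^n) is
   exactly Z/2^n Z). *)
Definition V (n : nat) : finType := ('Z_(2 ^ n) * 'Z_(2 ^ n))%type.

Definition gens (n : nat) : seq ('Z_(2 ^ n) * 'Z_(2 ^ n)) :=
  [:: (1, 0); (-1, 0); (0, 1); (0, -1); (1, 1); (-1, -1)]%R.

Definition adj (n : nat) : rel (V n) :=
  fun u v => has (fun s : 'Z_(2 ^ n) * 'Z_(2 ^ n) =>
                    v == ((u.1 + s.1)%R, (u.2 + s.2)%R)) (gens n).

Definition walk (n k : nat) (u v : V n) : bool :=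
  [exists p : k.-tuple (V n), path (@adj n) u p && (last u p == v)].

(* Shortest-path distance (the graph is finite and connected, so the minimum
   is attained below #|V n|; #|V n| is only a default never reached). *)
Definition dist (n : nat) (u v : V n) : nat :=
  \big[minn/#|V n|]_(k < #|V n| | walk n k u v) k.

Definition diam (n : nat) : nat := \max_(uv : V n * V n) dist n uv.1 uv.2.

Definition NA (n : nat) : nat :=
  #|[set v : V n | dist n ((0 : 'Z_(2 ^ n))%R, (0 : 'Z_(2 ^ n))%R) v == diam n]|.

(* Main.v *)
Require Import Defs.
From mathcomp Require Import all_boot all_order all_algebra.
From mathcomp Require Import zify_ssreflect ring.
From Stdlib Require Import Lia.
Import GRing.Theory.
Lemma vadd1 p (a : 'I_p.+2) : val (a + 1)%R = if a == p.+1 :> nat then 0 else a.+1.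
Proof.
have ha := ltn_ord a.
rewrite /= (modn_small (m:=1)) // addn1.
case: (@eqP _ (nat_of_ord a) p.+1) => [e|ne]; first by rewrite e modnn.
by rewrite modn_small; lia.
Qed.
Lemma vsub1 p (a : 'I_p.+2) : val (a - 1)%R = if a == 0 :> nat then p.+1 else a.-1.
Proof.
have ha := ltn_ord a.
rewrite /= (modn_small (m:=1)) // (modn_small (m:=p.+1)) //.
case: (@eqP _ (nat_of_ord a) 0) => [->|ne]; first by rewrite modn_small.
have -> : a + p.+1 = a.-1 + p.+2 by lia.
by rewrite modnDr modn_small; lia.
Qed.

Lemma vadd0 p (a : 'I_p.+2) : val (a + 0)%R = a.
Proof. by rewrite addr0. Qed.

Definition hd (x y m : nat) :=
  minn (minn (maxn x y) (y + m - x)) (minn (x + m - y) (maxn (m - x) (m - y))).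
Definition F {p} (w : 'I_p.+2 * 'I_p.+2) := hd w.1 w.2 p.+2.

Lemma hd_le x y M : x <= M -> y <= M ->
  [/\ hd x y M <= maxn x y, hd x y M + x <= y + M, hd x y M + y <= x + M
     & hd x y M + minn x y <= M].
Proof.
move=> hx hy; rewrite /hd; split.
- by rewrite geq_min geq_minl.
- have : minn (minn (maxn x y) (y + M - x)) (minn (x + M - y) (maxn (M - x) (M - y))) <= y + M - x.
    by rewrite geq_min geq_minr.
  lia.
- have : minn (minn (maxn x y) (y + M - x)) (minn (x + M - y) (maxn (M - x) (M - y))) <= x + M - y.
    by rewrite geq_min orbC geq_minl.
  lia.
- have : minn (minn (maxn x y) (y + M - x)) (minn (x + M - y) (maxn (M - x) (M - y))) <= maxn (M - x) (M - y).
    by rewrite geq_min orbC geq_minr.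
  lia.
Qed.

Lemma minnE a b : minn a b = a \/ minn a b = b.
Proof. by rewrite /minn; case: ifP; auto. Qed.

Lemma hd_cases x y M : x <= M -> y <= M ->
  [\/ hd x y M = maxn x y, hd x y M + x = y + M, hd x y M + y = x + M
     | hd x y M + minn x y = M].
Proof.
move=> hx hy; rewrite /hd.
set a := maxn x y; set b := y + M - x; set c := x + M - y.
set d := maxn (M - x) (M - y).
case: (minnE (minn a b) (minn c d)) => ->;
  [case: (minnE a b) | case: (minnE c d)] => ->; rewrite /a /b /c /d.
- by constructor 1.
- by constructor 2; lia.
- by constructor 3; lia.
- by constructor 4; lia.
Qed.

Arguments hd_cases {x y M}.
Arguments hd_le {x y M}.

Lemma hd_lip_nat x y x' y' M : x < M -> y < M -> x' < M -> y' < M ->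
  (forall h, h = maxn x y \/ h + x = y + M \/ h + y = x + M \/ h + minn x y = M ->
       h.+1 >= maxn x' y' \/ h.+1 + x' >= y' + M \/ h.+1 + y' >= x' + M
          \/ h.+1 + minn x' y' >= M) ->
  hd x' y' M <= (hd x y M).+1.
Proof.
move=> hx hy hx' hy' H.
case: (@hd_le x' y' M (ltnW hx') (ltnW hy')) => a1 a2 a3 a4.
case: (@hd_cases x y M (ltnW hx) (ltnW hy)) => c;
  have := H (hd x y M) (ltac:(lia)); lia.
Qed.

Definition gensp p : seq ('I_p.+2 * 'I_p.+2) :=
  [:: (1, 0); (-1, 0); (0, 1); (0, -1); (1, 1); (-1, -1)]%R.

Lemma lip p (a b : 'I_p.+2) s : s \in gensp p ->
  F ((a + s.1)%R, (b + s.2)%R) <= (F (a, b)).+1.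
Proof.
have ha := ltn_ord a; have hb := ltn_ord b.
rewrite /F !inE => /orP[/eqP->|/orP[/eqP->|/orP[/eqP->|/orP[/eqP->|/orP[/eqP->|/eqP->]]]]];
  apply: hd_lip_nat => //; rewrite ?vadd1 ?vsub1 ?vadd0 => h;
  repeat case: ifP => /eqP ?; move=> /= c; lia.
Qed.

Lemma path_lower n (u : V n) (s : seq (V n)) : path (@adj n) u s ->
  F (((last u s).1 - u.1)%R, ((last u s).2 - u.2)%R) <= size s.
Proof.
elim/last_ind: s => [|s x IH].
  by move=> _ /=; rewrite !subrr /F /hd /=; lia.
rewrite rcons_path => /andP [hp hadj]; rewrite last_rcons size_rcons.
case/hasP: hadj => g hg /eqP ->.
rewrite (addrAC _ g.1) (addrAC _ g.2).
have := @lip (Zp_trunc (2 ^ n)) ((last u s).1 - u.1)%R ((last u s).2 - u.2)%R g hg.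
by move/leq_trans; apply; rewrite ltnS; apply: IH.
Qed.

Lemma walk_lower n k (u v : V n) :
  walk n k u v -> F ((v.1 - u.1)%R, (v.2 - u.2)%R) <= k.
Proof.
case/existsP => t /andP [hp /eqP hl]; subst v.
have := @path_lower n u t hp; by rewrite size_tuple.
Qed.

Lemma walk0 n u : walk n 0 u u.
Proof. by apply/existsP; exists [tuple]; rewrite /= eqxx. Qed.

Lemma walk_cat n k1 k2 u w v : walk n k1 u w -> walk n k2 w v -> walk n (k1 + k2) u v.
Proof.
case/existsP => t1 /andP[p1 /eqP l1]; case/existsP => t2 /andP[p2 /eqP l2].
apply/existsP; exists (cat_tuple t1 t2).
by rewrite /= cat_path last_cat l1 p1 p2 l2 eqxx.
Qed.

Arguments walk_cat {n k1 k2 u w v}.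

Lemma walk1 n (u : V n) g : g \in gens n -> walk n 1 u ((u.1 + g.1)%R, (u.2 + g.2)%R).
Proof.
move=> hg; apply/existsP; exists [tuple ((u.1 + g.1)%R, (u.2 + g.2)%R)].
rewrite /= andbT eqxx andbT; apply/hasP; exists g => //.
Qed.

Arguments walk1 {n u g}.

Lemma walk_line n k (u : V n) g : g \in gens n ->
  walk n k u ((u.1 + g.1 *+ k)%R, (u.2 + g.2 *+ k)%R).
Proof.
move=> hg; elim: k => [|k IH].
  by rewrite !mulr0n !addr0 -surjective_pairing; apply: walk0.
have := walk_cat IH (walk1 hg); rewrite addn1 /= !mulrSr !addrA.
done.
Qed.

Arguments walk_line {n} k {u g}.

Lemma walk2 n k1 k2 (u v : V n) a1 b1 a2 b2 :
  (a1, b1) \in gens n -> (a2, b2) \in gens n ->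
  v.1 = (u.1 + a1 *+ k1 + a2 *+ k2)%R -> v.2 = (u.2 + b1 *+ k1 + b2 *+ k2)%R ->
  walk n (k1 + k2) u v.
Proof.
move=> h1 h2 e1 e2; have := walk_cat (walk_line k1 h1) (walk_line k2 h2).
by rewrite [v]surjective_pairing e1 e2.
Qed.

Lemma walk_up n (u v : V n) : walk n (F ((v.1 - u.1)%R, (v.2 - u.2)%R)) u v.
Proof.
set p := Zp_trunc (2 ^ n).
set x := nat_of_ord (v.1 - u.1)%R; set y := nat_of_ord (v.2 - u.2)%R.
have hx : x < p.+2 by apply: ltn_ord.
have hy : y < p.+2 by apply: ltn_ord.
have ex : (x%:R = v.1 - u.1 :> 'I_p.+2)%R by apply: natr_Zp.
have ey : (y%:R = v.2 - u.2 :> 'I_p.+2)%R by apply: natr_Zp.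
have hM : ((p.+2)%:R = 0 :> 'I_p.+2)%R by rewrite Zp_nat; apply/val_inj; rewrite /= modnn.
have G : forall a b : 'I_p.+2, (a, b) \in [:: (1, 0); (-1, 0); (0, 1); (0, -1); (1, 1); (-1, -1)]%R ->
   (a, b) \in gens n by [].
rewrite /F -/x -/y.
have fin : forall (a b c : 'I_p.+2), a = b -> a = c -> b = c by move=> ? ? ? -> ->.
case: (hd_cases (ltnW hx) (ltnW hy)) => c.
- case: (leqP y x) => hxy.
  + have -> : hd x y p.+2 = y + (x - y) by lia.
    apply: (@walk2 n _ _ u v 1 1 1 0)%R; rewrite ?/gens ?inE ?eqxx ?orbT ?orTb //;
    rewrite ?mul0rn ?addr0 ?mulNrn; repeat (rewrite natrB; last by lia);
    rewrite ?ex ?ey ?hM; ring.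
  + have -> : hd x y p.+2 = x + (y - x) by lia.
    apply: (@walk2 n _ _ u v 1 1 0 1)%R; rewrite ?/gens ?inE ?eqxx ?orbT ?orTb //;
    rewrite ?mul0rn ?addr0 ?mulNrn; repeat (rewrite natrB; last by lia);
    rewrite ?ex ?ey ?hM; ring.
- have -> : hd x y p.+2 = y + (p.+2 - x) by lia.
  apply: (@walk2 n _ _ u v 0 1 (-1) 0)%R; rewrite ?/gens ?inE ?eqxx ?orbT ?orTb //;
  rewrite ?mul0rn ?addr0 ?mulNrn; repeat (rewrite natrB; last by lia);
  rewrite ?ex ?ey ?hM; ring.
- have -> : hd x y p.+2 = x + (p.+2 - y) by lia.
  apply: (@walk2 n _ _ u v 1 0 0 (-1))%R; rewrite ?/gens ?inE ?eqxx ?orbT ?orTb //;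
  rewrite ?mul0rn ?addr0 ?mulNrn; repeat (rewrite natrB; last by lia);
  rewrite ?ex ?ey ?hM; ring.
- case: (leqP x y) => hxy.
  + have -> : hd x y p.+2 = (p.+2 - y) + (y - x) by lia.
    apply: (@walk2 n _ _ u v (-1) (-1) (-1) 0)%R; rewrite ?/gens ?inE ?eqxx ?orbT ?orTb //;
    rewrite ?mul0rn ?addr0 ?mulNrn; repeat (rewrite natrB; last by lia);
    rewrite ?ex ?ey ?hM; ring.
  + have -> : hd x y p.+2 = (p.+2 - x) + (x - y) by lia.
    apply: (@walk2 n _ _ u v (-1) (-1) 0 (-1))%R; rewrite ?/gens ?inE ?eqxx ?orbT ?orTb //;
    rewrite ?mul0rn ?addr0 ?mulNrn; repeat (rewrite natrB; last by lia);
    rewrite ?ex ?ey ?hM; ring.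
Qed.


Lemma cardV n : #|V n| = (Zp_trunc (2 ^ n)).+2 * (Zp_trunc (2 ^ n)).+2.
Proof. by rewrite /V card_prod card_ord. Qed.

Lemma F_lt p (w : 'I_p.+2 * 'I_p.+2) : F w < p.+2.
Proof.
rewrite /F; have [a1 _ _ _] := hd_le (ltnW (ltn_ord w.1)) (ltnW (ltn_ord w.2)).
have := ltn_ord w.1; have := ltn_ord w.2; lia.
Qed.

Lemma bigmin_le_seq (I : eqType) (r : seq I) x (P : pred I) (G : I -> nat) j :
  j \in r -> P j -> \big[minn/x]_(i <- r | P i) G i <= G j.
Proof.
elim: r => // a r IH; rewrite inE big_cons => /orP [/eqP <- -> | hj hP].
  exact: geq_minl.
case: ifP => _; last exact: IH.
by rewrite geq_min IH ?orbT.
Qed.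

Lemma dist_F n (u v : V n) : dist n u v = F ((v.1 - u.1)%R, (v.2 - u.2)%R).
Proof.
rewrite /dist; set K := F _.
have hK : K < #|V n|.
  rewrite cardV; have := @F_lt (Zp_trunc (2 ^ n)) ((v.1 - u.1)%R, (v.2 - u.2)%R).
  rewrite -/K; lia.
apply/eqP; rewrite eqn_leq; apply/andP; split.
  exact: (@bigmin_le_seq _ _ _ (fun k : 'I_#|V n| => walk n k u v) (fun k => nat_of_ord k)
     (Ordinal hK) (mem_index_enum _) (walk_up n u v)).
apply: (big_ind (fun m => K <= m)) => [|a b ha hb|i hi].
- exact: ltnW.
- by rewrite leq_min ha hb.
- exact: walk_lower hi.
Qed.

Lemma diam_eq n D (a b : 'Z_(2 ^ n)) :
  (forall v : V n, F v <= D) -> F (a, b) = D -> diam n = D.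
Proof.
move=> H e; apply/eqP; rewrite eqn_leq; apply/andP; split.
  by apply/bigmax_leqP => uv _; rewrite dist_F; apply: H.
rewrite /diam; apply: leq_trans (leq_bigmax (((0, 0)%R, (a, b)) : V n * V n)).
by rewrite dist_F /= !subr0 e.
Qed.

Lemma card_L n D (L : seq (nat * nat)) : uniq L ->
  (forall z, z \in L -> z.1 < (Zp_trunc (2 ^ n)).+2 /\ z.2 < (Zp_trunc (2 ^ n)).+2) ->
  (forall x y, x < (Zp_trunc (2 ^ n)).+2 -> y < (Zp_trunc (2 ^ n)).+2 ->
     (hd x y (Zp_trunc (2 ^ n)).+2 == D) = ((x, y) \in L)) ->
  #|[set v : V n | F v == D]| = size L.
Proof.
move=> uL bL hL.
pose phi := fun v : V n => (nat_of_ord v.1, nat_of_ord v.2).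
have phi_inj : injective phi.
  by move=> [a b] [c d] [/val_inj -> /val_inj ->].
rewrite cardE -(size_map phi); apply: perm_size; apply: uniq_perm => //.
  by rewrite map_inj_uniq // enum_uniq.
move=> z; apply/mapP/idP.
  move=> [v]; rewrite mem_enum inE => hv ->.
  by rewrite -hL // ltn_ord.
case: z => x y hz; have [/= hx hy] := bL _ hz.
exists ((Ordinal hx, Ordinal hy) : V n) => //.
by rewrite mem_enum inE /F /= hL.
Qed.

Lemma NA_gen n D (L : seq (nat * nat)) : 0 < n ->
  (forall x y, x < 2 ^ n -> y < 2 ^ n -> hd x y (2 ^ n) <= D) ->
  uniq L ->
  (forall z, z \in L -> z.1 < 2 ^ n /\ z.2 < 2 ^ n) ->
  (forall x y, x < 2 ^ n -> y < 2 ^ n ->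
     (hd x y (2 ^ n) == D) = ((x, y) \in L)) ->
  L != [::] ->
  NA n = size L.
Proof.
move=> n0 Hle uL bL hL nL.
have e : (Zp_trunc (2 ^ n)).+2 = 2 ^ n.
  by apply: Zp_cast; rewrite -{1}(expn0 2) ltn_exp2l.
rewrite -e in Hle bL hL.
case: L uL bL hL nL => [|[a b] L'] // uL bL hL _.
have [/= ha hb] := bL (a, b) (mem_head _ _).
have hab : F ((Ordinal ha, Ordinal hb) : V n) = D.
  by apply/eqP; rewrite /F /= hL // mem_head.
have hD := @diam_eq n D (Ordinal ha) (Ordinal hb)
  (fun v => Hle _ _ (ltn_ord v.1) (ltn_ord v.2)) hab.
rewrite /NA hD; transitivity #|[set v : V n | F v == D]|; last exact: (@card_L n D _ uL bL hL).
apply: eq_card => v.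
by rewrite !inE dist_F !subr0 -surjective_pairing.
Qed.

Lemma pow2mod n : 2 ^ n %% 3 = if odd n then 2 else 1.
Proof.
elim: n => // n IH; rewrite expnS -modnMmr IH /=; by case: (odd n).
Qed.

Definition Lodd t := [:: (t.+1, 2*t+2); (2*t+1, t); (t, 2*t+1); (2*t+1, t.+1);
  (2*t+2, t.+1); (t.+1, 2*t+1)].

Definition Leven t := [:: (2*t, t-1); (2*t, t); (2*t, t.+1); (2*t+1, t); (2*t+1, t.+1);
  (2*t+2, t.+1); (t-1, 2*t); (t, 2*t); (t.+1, 2*t); (t, 2*t+1); (t.+1, 2*t+1);
  (t.+1, 2*t+2)].

Lemma odd_arith t M : M = 3*t+2 -> 2 <= t ->
 [/\ forall x y, x < M -> y < M -> hd x y M <= 2*t+1,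
     uniq (Lodd t), forall z, z \in Lodd t -> z.1 < M /\ z.2 < M
   & forall x y, x < M -> y < M -> (hd x y M == 2*t+1) = ((x,y) \in Lodd t)].
Proof.
move=> hM ht; split.
- move=> x y hx hy; have [a1 a2 a3 a4] := hd_le (ltnW hx) (ltnW hy).
  case: (hd_cases (ltnW hx) (ltnW hy)) => c; lia.
- rewrite /= !inE !xpair_eqE !negb_or; repeat (apply/andP; split); lia.
- move=> [a b]; rewrite !inE !xpair_eqE /= => h; lia.
- move=> x y hx hy; have [a1 a2 a3 a4] := hd_le (ltnW hx) (ltnW hy).
  apply/idP/idP.
  + move/eqP => h.
    have : x = 2*t+1 \/ x = 2*t+2 \/ x = t \/ x = t.+1 by lia.
    case=> [E|[E|[E|E]]]; rewrite E.
    * have : y = t \/ y = t.+1 by lia.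
      by case=> ->; rewrite !inE eqxx /= ?orbT.
    * have -> : y = t.+1 by lia.
      by rewrite !inE eqxx /= ?orbT.
    * have -> : y = 2*t+1 by lia.
      by rewrite !inE eqxx /= ?orbT.
    * have : y = 2*t+1 \/ y = 2*t+2 by lia.
      by case=> ->; rewrite !inE eqxx /= ?orbT.
  + rewrite !inE !xpair_eqE => hh; apply/eqP.
    case: (hd_cases (ltnW hx) (ltnW hy)) => c; lia.
Qed.

Lemma even_arith t M : M = 3*t+1 -> 5 <= t ->
 [/\ forall x y, x < M -> y < M -> hd x y M <= 2*t,
     uniq (Leven t), forall z, z \in Leven t -> z.1 < M /\ z.2 < M
   & forall x y, x < M -> y < M -> (hd x y M == 2*t) = ((x,y) \in Leven t)].
Proof.
move=> hM ht; split.
- move=> x y hx hy; have [a1 a2 a3 a4] := hd_le (ltnW hx) (ltnW hy).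
  case: (hd_cases (ltnW hx) (ltnW hy)) => c; lia.
- rewrite /= !inE !xpair_eqE !negb_or; repeat (apply/andP; split); lia.
- move=> [a b]; rewrite !inE !xpair_eqE /= => h; lia.
- move=> x y hx hy; have [a1 a2 a3 a4] := hd_le (ltnW hx) (ltnW hy).
  apply/idP/idP.
  + move/eqP => h.
    have : x = 2*t \/ x = 2*t+1 \/ x = 2*t+2 \/ x = t-1 \/ x = t \/ x = t.+1 by lia.
    case=> [E|[E|[E|[E|[E|E]]]]]; rewrite E.
    * have : y = t-1 \/ y = t \/ y = t.+1 by lia.
      by case=> [->|[->|->]]; rewrite !inE eqxx /= ?orbT.
    * have : y = t \/ y = t.+1 by lia.
      by case=> ->; rewrite !inE eqxx /= ?orbT.
    * have -> : y = t.+1 by lia.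
      by rewrite !inE eqxx /= ?orbT.
    * have -> : y = 2*t by lia.
      by rewrite !inE eqxx /= ?orbT.
    * have : y = 2*t \/ y = 2*t+1 by lia.
      by case=> ->; rewrite !inE eqxx /= ?orbT.
    * have : y = 2*t \/ y = 2*t+1 \/ y = 2*t+2 by lia.
      by case=> [->|[->|->]]; rewrite !inE eqxx /= ?orbT.
  + rewrite !inE !xpair_eqE => hh; apply/eqP.
    case: (hd_cases (ltnW hx) (ltnW hy)) => c; lia.
Qed.

Definition L1 := [:: (1, 0); (0, 1); (1, 1)].
Definition L2 := [:: (2,0); (1,3); (2,1); (3,1); (2,3); (0,2); (1,2); (3,2); (2,2)].

Lemma small1 x y : x < 2 -> y < 2 -> (hd x y 2 == 1) = ((x, y) \in L1).
Proof. by case: x => [|[|x]] //; case: y => [|[|y]]. Qed.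

Lemma small2 x y : x < 4 -> y < 4 -> (hd x y 4 == 2) = ((x, y) \in L2).
Proof. by case: x => [|[|[|[|x]]]] //; case: y => [|[|[|[|y]]]]. Qed.

Theorem mainTheorem6 :
  NA 1 = 3 /\ NA 2 = 9 /\
  (forall n : nat, 2 < n -> NA n = (if odd n then 6 else 12)).
Proof.
split.
  rewrite (@NA_gen 1 1 L1) //.
  - move=> x y hx hy; have [a1 a2 a3 a4] := hd_le (ltnW hx) (ltnW hy); lia.
  - by move=> [a b]; rewrite !inE !xpair_eqE /= => h; lia.
  - exact: small1.
split.
  rewrite (@NA_gen 2 2 L2) //.
  - move=> x y hx hy; have [a1 a2 a3 a4] := hd_le (ltnW hx) (ltnW hy).
    case: (hd_cases (ltnW hx) (ltnW hy)) => c; rewrite /= in hx hy *; lia.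
  - by move=> [a b]; rewrite !inE !xpair_eqE /= => h; lia.
  - exact: small2.
move=> n hn.
have hd3 := divn_eq (2 ^ n) 3; rewrite pow2mod in hd3.
have h8 : 8 <= 2 ^ n by rewrite (_ : 8 = 2 ^ 3) // leq_exp2l.
set t := 2 ^ n %/ 3 in hd3.
case hodd: (odd n) hd3 => hd3.
  have [A B C D] := @odd_arith t (2 ^ n) ltac:(lia) ltac:(lia).
  by rewrite (@NA_gen n (2*t+1) (Lodd t)) //; lia.
have h16 : 16 <= 2 ^ n.
  have : 3 < n by case: n hn hodd {hd3 h8 t} => [|[|[|[|n]]]].
  by move=> h4; rewrite (_ : 16 = 2 ^ 4) // leq_exp2l.
have [A B C D] := @even_arith t (2 ^ n) ltac:(lia) ltac:(lia).
by rewrite (@NA_gen n (2*t) (Leven t)) //; lia.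
Qed.
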